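(* Let $K_{5,6}$ be the complete bipartite graph with bipartition $(X,Y)$, $X=\{x_1,\dots,x_5\}$, $Y=\{y_1,\dots,y_6\}$, and let $S=\{x_1,x_2,y_1,y_2\}$. Then $\kappa^*_{K_{5,6}}(S)=4$.
   Context: For $S\subseteq V(G)$ with $|S|\ge 2$, an $S$-Steiner tree of $G$ is a subtree $T$ of $G$ with $S\subseteq V(T)$ all of whose leaves belong to $S$. A family of $S$-Steiner trees $T_1,\dots,T_k$ is completely independent if for all $1\le p<q\le k$: $E(T_p)\cap E(T_q)=\emptyset$, $V(T_p)\cap V(T_q)=S$, and for any two vertices $x_1,x_2\in S$ the $(x_1,x_2)$-paths in $T_p$ and in $T_q$ are internally disjoint. $\kappa^*_G(S)$ is the maximum number of trees in a completely independent family of $S$-Steiner trees in $G$. *)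

(* Defs.v *)
From mathcomp Require Import all_boot.
Set Implicit Arguments. Unset Strict Implicit. Unset Printing Implicit Defensive.

Section Steiner.
Variables (T : finType) (G : rel T).

Definition is_graph_edge (e : {set T}) : bool :=
  [exists u, exists v, [&& u != v, G u v & e == [set u; v]]].

Definition eadj (E : {set {set T}}) : rel T :=
  fun a b => (a != b) && ([set a; b] \in E).

(* p is (the tail of) a path x = x :: p ... y using only edges of E *)
Definition path_in (E : {set {set T}}) (x y : T) (p : seq T) : bool :=
  [&& path (eadj E) x p, last x p == y & uniq (x :: p)].

Definition is_cycle_in (E : {set {set T}}) (c : seq T) : bool :=
  [&& 2 < size c, uniq c & cycle (eadj E) c].

Definition is_subtree (VT : {set T}) (ET : {set {set T}}) : Prop :=
  [/\ forall e, e \in ET -> is_graph_edge e && (e \subset VT),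
      forall u v, u \in VT -> v \in VT -> exists p, path_in ET u v p
    & forall c, ~~ is_cycle_in ET c].

Definition tree_deg (ET : {set {set T}}) (v : T) : nat := #|[set e in ET | v \in e]|.

Definition steiner_tree (S : {set T}) (t : {set T} * {set {set T}}) : Prop :=
  [/\ is_subtree t.1 t.2, S \subset t.1 &
      forall v, v \in t.1 -> tree_deg t.2 v = 1 -> v \in S].

Definition compl_indep (S : {set T}) (k : nat)
    (F : 'I_k -> {set T} * {set {set T}}) : Prop :=
  (forall i, steiner_tree S (F i)) /\
  (forall i j, i != j ->
     [/\ (F i).2 :&: (F j).2 = set0,
         (F i).1 :&: (F j).1 = S &
         forall x1 x2 p1 p2, x1 \in S -> x2 \in S ->
           path_in (F i).2 x1 x2 p1 -> path_in (F j).2 x1 x2 p2 ->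
           forall v, v \in x1 :: p1 -> v \in x1 :: p2 -> v = x1 \/ v = x2]).

Definition kappa_star_eq (S : {set T}) (n : nat) : Prop :=
  (exists F : 'I_n -> {set T} * {set {set T}}, compl_indep S F) /\
  (forall k (F : 'I_k -> {set T} * {set {set T}}), compl_indep S F -> k <= n).

End Steiner.

Definition K56V : finType := ('I_5 + 'I_6)%type.
Definition K56 : rel K56V := fun u v =>
  match u, v with inl _, inr _ | inr _, inl _ => true | _, _ => false end.

Definition x_ (i : nat) : K56V := inl (inord i).
Definition y_ (i : nat) : K56V := inr (inord i).
(* S = {x1, x2, y1, y2} (0-based indices 0,1) *)
Definition S56 : {set K56V} := [set x_ 0; x_ 1; y_ 0; y_ 1].

(* Main.v *)
Require Import Defs.
From mathcomp Require Import all_boot zify.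
From Stdlib Require Import ClassicalEpsilon.
Set Implicit Arguments. Unset Strict Implicit. Unset Printing Implicit Defensive.

Section Gen.
Variables (T : finType) (G : rel T).

Lemma set2_eqE (a b c d : T) :
  ([set a; b] == [set c; d]) = ((a == c) && (b == d)) || ((a == d) && (b == c)).
Proof.
apply/idP/idP.
  move/eqP=> E.
  have ha : a \in [set c; d] by rewrite -E !inE eqxx.
  have hb : b \in [set c; d] by rewrite -E !inE eqxx orbT.
  have hc : c \in [set a; b] by rewrite E !inE eqxx.
  have hd : d \in [set a; b] by rewrite E !inE eqxx orbT.
  move: ha hb hc hd; rewrite !inE.
  case: (eqVneq a c) => [->|_] /=.
    case: (eqVneq b d) => [->|_] /=; first by rewrite ?eqxx.
    by rewrite !orbF => _ /eqP -> _ /eqP ->; rewrite eqxx.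
  by move=> /eqP -> _ /eqP -> _; rewrite !eqxx.
case/orP=> /andP [] /eqP -> /eqP ->; first by [].
by rewrite setUC.
Qed.

Lemma eadj_sym (E : {set {set T}}) : symmetric (eadj E).
Proof. by move=> a b; rewrite /eadj eq_sym setUC. Qed.

Lemma path_in_rev (E : {set {set T}}) a b p : path_in E a b p ->
  exists q, path_in E b a q /\ (a :: p) =i (b :: q).
Proof.
case/and3P=> pth /eqP lst uq.
have hr : rev (a :: p) = b :: rev (belast a p).
  by rewrite lastI rev_rcons lst.
exists (rev (belast a p)); split; last by move=> v; rewrite -hr mem_rev.
apply/and3P; split.
- have := rev_path (eadj E) a p; rewrite lst => ->.
  by rewrite (@eq_path _ _ (eadj E)) // => x y; rewrite eadj_sym.
- have : last b (b :: rev (belast a p)) = a by rewrite -hr rev_cons last_rcons.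
  by move=> /= ->.
- by rewrite -hr rev_uniq.
Qed.

Lemma path_in_inner (E : {set {set T}}) a b p v : path_in E a b p -> v \in p -> v != b ->
  exists u w, [/\ u != w, eadj E v u & eadj E v w].
Proof.
case/and3P=> pth /eqP lst uq vp vb.
case/splitPr: vp pth lst uq => p1 p2 pth lst uq.
move: pth lst; rewrite cat_path last_cat => /andP [] _ /= /andP [] h1 h2.
case: p2 h2 uq => [|w p3] h2 uq /=; first by move=> ev; rewrite ev eqxx in vb.
move=> _; case/andP: h2 => h3 _.
exists (last a p1), w; split => //; last by rewrite eadj_sym.
apply/negP=> /eqP ew.
move: uq; rewrite -cat_cons cat_uniq => /and3P [] _ hh _.
by move: hh; rewrite /= -ew mem_last orbT.
Qed.

Lemma cycle_inner (E : {set {set T}}) c v : is_cycle_in E c -> v \in c ->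
  exists u w, [/\ u != w, eadj E v u & eadj E v w].
Proof.
case/and3P=> sz uq cy vc.
case: (rot_to vc) => i s hs.
move: cy uq sz; rewrite -(rot_cycle i) -(rot_uniq i) -(size_rot i) hs.
case: s hs => [|w [|z s3]] hs //= /andP [] e1.
move=> e2 /andP [] _ /andP [] nw _ _.
move: e2; rewrite rcons_path => /andP [] _ e2.
case/andP: e2 => _ e2. exists w, (last z s3); split => //; last by rewrite eadj_sym.
by apply/negP=> /eqP ew; move: nw; rewrite ew mem_last.
Qed.

Lemma path_mem_V (E : {set {set T}}) (V : {set T}) a b p v : (forall e, e \in E -> e \subset V) ->
  path_in E a b p -> v \in p -> v \in V.
Proof.
move=> hE /and3P [] pth _ _ vp.
case/splitPr: vp pth => p1 p2.
rewrite cat_path => /andP [] _ /= /andP [] /andP [] _ h _.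
by move/subsetP: (hE _ h); apply; rewrite !inE eqxx orbT.
Qed.

Lemma conn_path (E : {set {set T}}) u v : connect (eadj E) u v -> exists p, path_in E u v p.
Proof.
case/connectP=> p pth ->.
case: (shortenP pth) => p' pth' uq _.
by exists p'; apply/and3P; split.
Qed.

Lemma center_conn (E : {set {set T}}) (V : {set T}) c : (forall v, v \in V -> connect (eadj E) v c) ->
  forall u v, u \in V -> v \in V -> exists p, path_in E u v p.
Proof.
move=> h u v hu hv; apply: conn_path.
apply: connect_trans (h _ hu) _.
by rewrite (sym_connect_sym (@eadj_sym E)) h.
Qed.

Lemma no_cycle (E : {set {set T}}) (a b : T) :
  (forall v u w, u != w -> eadj E v u -> eadj E v w -> v \in [:: a; b]) ->
  forall c, ~~ is_cycle_in E c.
Proof.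
move=> h c; apply/negP=> cy.
have sub : {subset c <= [:: a; b]}.
  by move=> v vc; case: (cycle_inner cy vc) => u [w] [] ? ? ?; apply: (h v u w).
case/and3P: cy => sz uq _.
by have := uniq_leq_size uq sub; rewrite leqNgt sz.
Qed.

Lemma eadj_graph (E : {set {set T}}) a b : (forall e, e \in E -> is_graph_edge G e) ->
  eadj E a b -> G a b || G b a.
Proof.
move=> hE /andP [] _ /hE /existsP [u] /existsP [v] /and3P [] _ g.
by rewrite eq_sym set2_eqE => /orP [] /andP [] /eqP <- /eqP <-; rewrite g ?orbT.
Qed.

End Gen.

Section Gen2.
Variables (T : finType) (G : rel T).

Lemma adj_V (E : {set {set T}}) (V : {set T}) u v :
  (forall e, e \in E -> e \subset V) -> eadj E u v -> (u \in V) && (v \in V).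
Proof.
move=> hE /andP [] _ /hE /subsetP h.
by rewrite !h // !inE eqxx ?orbT.
Qed.

Lemma deg2 (E : {set {set T}}) v e1 e2 : e1 \in E -> e2 \in E -> v \in e1 -> v \in e2 ->
  e1 != e2 -> 1 < tree_deg E v.
Proof.
move=> h1 h2 v1 v2 ne.
have <- : #|[set e1; e2]| = 2 by rewrite cards2 ne.
apply: subset_leq_card; apply/subsetP => e; rewrite !inE.
by case/orP => /eqP ->; apply/andP.
Qed.

Lemma sub2 (V : {set T}) u v : u \in V -> v \in V -> [set u; v] \subset V.
Proof. by move=> hu hv; apply/subsetP=> w; rewrite !inE => /orP [] /eqP ->. Qed.

Lemma ge2 u v : u != v -> G u v -> is_graph_edge G [set u; v].
Proof. by move=> uv g; apply/existsP; exists u; apply/existsP; exists v; rewrite uv g eqxx. Qed.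

Lemma cond3_gen (E1 E2 : {set {set T}}) (V1 V2 S : {set T}) :
  (forall e, e \in E1 -> e \subset V1) -> (forall e, e \in E2 -> e \subset V2) ->
  V1 :&: V2 = S ->
  (forall s u w, s \in S -> eadj E1 s u -> eadj E1 s w -> u = w) ->
  forall x1 x2 p1 p2, x1 \in S -> x2 \in S ->
  path_in E1 x1 x2 p1 -> path_in E2 x1 x2 p2 ->
  forall v, v \in x1 :: p1 -> v \in x1 :: p2 -> v = x1 \/ v = x2.
Proof.
move=> hE1 hE2 hV hS x1 x2 p1 p2 _ _ pa1 pa2 v.
rewrite !inE; case: (eqVneq v x1) => [->|_] /=; first by left.
case: (eqVneq v x2) => [->|vx2] /=; first by right.
move=> v1 v2; exfalso.
have vS : v \in S by rewrite -hV inE (path_mem_V hE1 pa1 v1) (path_mem_V hE2 pa2 v2).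
case: (path_in_inner pa1 v1 vx2) => u [w] [] uw a1 a2.
by move: uw; rewrite (hS _ _ _ vS a1 a2) eqxx.
Qed.

End Gen2.

Notation X0 := (inl (@Ordinal 5 0 isT) : K56V).
Notation X1 := (inl (@Ordinal 5 1 isT) : K56V).
Notation X2 := (inl (@Ordinal 5 2 isT) : K56V).
Notation X3 := (inl (@Ordinal 5 3 isT) : K56V).
Notation X4 := (inl (@Ordinal 5 4 isT) : K56V).
Notation Y0 := (inr (@Ordinal 6 0 isT) : K56V).
Notation Y1 := (inr (@Ordinal 6 1 isT) : K56V).
Notation Y2 := (inr (@Ordinal 6 2 isT) : K56V).
Notation Y3 := (inr (@Ordinal 6 3 isT) : K56V).
Notation Y4 := (inr (@Ordinal 6 4 isT) : K56V).
Notation Y5 := (inr (@Ordinal 6 5 isT) : K56V).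

Lemma S56E : S56 = [set X0; X1; Y0; Y1].
Proof.
rewrite /S56 /x_ /y_.
have -> : (inord 0 : 'I_5) = Ordinal (isT : 0 < 5) by apply: val_inj; rewrite /= inordK.
have -> : (inord 1 : 'I_5) = Ordinal (isT : 1 < 5) by apply: val_inj; rewrite /= inordK.
have -> : (inord 0 : 'I_6) = Ordinal (isT : 0 < 6) by apply: val_inj; rewrite /= inordK.
have -> : (inord 1 : 'I_6) = Ordinal (isT : 1 < 6) by apply: val_inj; rewrite /= inordK.
by [].
Qed.

Lemma K56_all (P : K56V -> Prop) : P X0 -> P X1 -> P X2 -> P X3 -> P X4 ->
  P Y0 -> P Y1 -> P Y2 -> P Y3 -> P Y4 -> P Y5 -> forall v, P v.
Proof.
move=> ? ? ? ? ? ? ? ? ? ? ?.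
case=> [[[|[|[|[|[|m]]]]] hm]|[[|[|[|[|[|[|m]]]]]] hm]] //;
  by rewrite (bool_irrelevance hm isT).
Qed.

Definition DS (a b : K56V) : {set K56V} * {set {set K56V}} :=
  ([set X0; X1; Y0; Y1; a; b],
   [set [set a; Y0]; [set a; Y1]; [set b; X0]; [set b; X1]; [set a; b]]).

Definition PT : {set K56V} * {set {set K56V}} :=
  ([set X0; X1; Y0; Y1], [set [set Y0; X0]; [set X0; Y1]; [set Y1; X1]]).

Definition okab (a b : K56V) := (a, b) \in [:: (X2, Y2); (X3, Y3); (X4, Y4)].

Ltac okcase H := move: H; rewrite /okab !inE => /or3P [] /eqP [? ?]; subst.

Lemma DS_edges a b : okab a b -> forall e, e \in (DS a b).2 ->
  is_graph_edge K56 e && (e \subset (DS a b).1).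
Proof.
move=> H; okcase H => e; rewrite !inE => He; repeat (case/orP: He => He);
  move/eqP: He => ->; rewrite ge2 //; apply: sub2; by rewrite !inE.
Qed.

Lemma DS_V a b : okab a b -> forall e, e \in (DS a b).2 -> e \subset (DS a b).1.
Proof. by move=> H e /(DS_edges H) /andP []. Qed.

Definition nbS (a b s : K56V) := match s with inl _ => b | inr _ => a end.

Lemma DS_nb1 a b : okab a b -> forall s u, s \in S56 ->
  eadj (DS a b).2 s u -> u = nbS a b s.
Proof.
move=> H; okcase H => s u; rewrite S56E !inE => Hs; repeat (case/orP: Hs => Hs);
  move/eqP: Hs => ->; elim/K56_all: u; rewrite /eadj !inE !set2_eqE //=.
Qed.

Lemma DS_nb a b : okab a b -> forall s u w, s \in S56 ->
  eadj (DS a b).2 s u -> eadj (DS a b).2 s w -> u = w.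
Proof.
by move=> H s u w hs /(DS_nb1 H hs) -> /(DS_nb1 H hs) ->.
Qed.

Lemma DS_conn a b : okab a b -> forall u v, u \in (DS a b).1 -> v \in (DS a b).1 ->
  exists p, path_in (DS a b).2 u v p.
Proof.
move=> H; apply: (center_conn (c := a)) => v Hv.
have hba : eadj (DS a b).2 b a by okcase H; rewrite /eadj !inE !set2_eqE.
have hxb : forall x, x \in [:: X0; X1] -> eadj (DS a b).2 x b.
  by okcase H => x; rewrite !inE => /orP [] /eqP ->; rewrite /eadj !inE !set2_eqE.
have hya : forall y, y \in [:: Y0; Y1] -> eadj (DS a b).2 y a.
  by okcase H => x; rewrite !inE => /orP [] /eqP ->; rewrite /eadj !inE !set2_eqE.
move: Hv; rewrite !inE => Hv; repeat (case/orP: Hv => Hv); move/eqP: Hv => ->.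
- by apply: (connect_trans (y := b)); apply: connect1; [apply: hxb | exact: hba].
- by apply: (connect_trans (y := b)); apply: connect1; [apply: hxb | exact: hba].
- by apply: connect1; apply: hya.
- by apply: connect1; apply: hya.
- exact: connect0.
- by apply: connect1.
Qed.

Lemma DS_acyc a b : okab a b -> forall c, ~~ is_cycle_in (DS a b).2 c.
Proof.
move=> H; apply: (no_cycle (a := a) (b := b)) => v u w uw hu hw.
case/andP: (adj_V (DS_V H) hu) => + _.
rewrite !inE => Hv; repeat (case/orP: Hv => Hv); move/eqP: Hv => ev;
  rewrite ?ev ?eqxx ?orbT //; exfalso; move: uw;
  rewrite (DS_nb H _ hu hw) ?eqxx // ev S56E !inE //.
Qed.

Lemma DS_leaf a b : okab a b -> forall v, v \in (DS a b).1 -> tree_deg (DS a b).2 v = 1 ->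
  v \in S56.
Proof.
move=> H v; rewrite S56E !inE => Hv; repeat (case/orP: Hv => Hv); move/eqP: Hv => ->;
  rewrite ?eqxx ?orbT //.
- move=> hd.
  have : 1 < tree_deg (DS a b).2 a.
    by apply: (deg2 (e1 := [set a; Y0]) (e2 := [set a; Y1])); okcase H; rewrite ?inE ?set2_eqE.
  by rewrite hd.
- move=> hd.
  have : 1 < tree_deg (DS a b).2 b.
    by apply: (deg2 (e1 := [set b; X0]) (e2 := [set b; X1])); okcase H; rewrite ?inE ?set2_eqE.
  by rewrite hd.
Qed.

Lemma DS_steiner a b : okab a b -> steiner_tree K56 S56 (DS a b).
Proof.
move=> H; split.
- split; [exact: DS_edges | exact: DS_conn | exact: DS_acyc].
- by apply/subsetP => v; rewrite S56E !inE => Hv; repeat (case/orP: Hv => Hv); rewrite Hv ?orbT.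
- exact: DS_leaf.
Qed.

Lemma PT_edges : forall e, e \in PT.2 -> is_graph_edge K56 e && (e \subset PT.1).
Proof.
move=> e; rewrite !inE => He; repeat (case/orP: He => He);
  move/eqP: He => ->; rewrite ge2 //; apply: sub2; by rewrite !inE.
Qed.

Lemma PT_V : forall e, e \in PT.2 -> e \subset PT.1.
Proof. by move=> e /PT_edges /andP []. Qed.

Lemma PT_nbY0 u : eadj PT.2 Y0 u -> u = X0.
Proof. by elim/K56_all: u; rewrite /eadj !inE !set2_eqE. Qed.

Lemma PT_nbX1 u : eadj PT.2 X1 u -> u = Y1.
Proof. by elim/K56_all: u; rewrite /eadj !inE !set2_eqE. Qed.

Lemma PT_conn : forall u v, u \in PT.1 -> v \in PT.1 -> exists p, path_in PT.2 u v p.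
Proof.
apply: (center_conn (c := X0)) => v.
rewrite !inE => Hv; repeat (case/orP: Hv => Hv); move/eqP: Hv => ->.
- exact: connect0.
- by apply: (connect_trans (y := Y1)); apply: connect1; rewrite /eadj !inE !set2_eqE.
- by apply: connect1; rewrite /eadj !inE !set2_eqE.
- by apply: connect1; rewrite /eadj !inE !set2_eqE.
Qed.

Lemma PT_acyc : forall c, ~~ is_cycle_in PT.2 c.
Proof.
apply: (no_cycle (a := X0) (b := Y1)) => v u w uw hu hw.
case/andP: (adj_V PT_V hu) => + _.
rewrite !inE => Hv; repeat (case/orP: Hv => Hv); move/eqP: Hv => ev; subst v => //.
- by move: uw; rewrite (PT_nbX1 hu) (PT_nbX1 hw) eqxx.
- by move: uw; rewrite (PT_nbY0 hu) (PT_nbY0 hw) eqxx.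
Qed.

Lemma PT_steiner : steiner_tree K56 S56 PT.
Proof.
split.
- split; [exact: PT_edges | exact: PT_conn | exact: PT_acyc].
- by rewrite S56E.
- by move=> v; rewrite S56E.
Qed.

Definition Fam (i : 'I_4) : {set K56V} * {set {set K56V}} :=
  match val i with 0 => DS X2 Y2 | 1 => DS X3 Y3 | 2 => DS X4 Y4 | _ => PT end.

Lemma Fam_steiner i : steiner_tree K56 S56 (Fam i).
Proof.
case: i => [[|[|[|[|m]]]] hm]; rewrite /Fam /=;
  by [apply: DS_steiner; rewrite /okab !inE | exact: PT_steiner].
Qed.

Lemma disj (A B : {set {set K56V}}) : (forall e, e \in A -> e \notin B) -> A :&: B = set0.
Proof.
move=> h; apply/setP => e; rewrite !inE.
by case: (boolP (e \in A)) => //= /h /negbTE.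
Qed.

Lemma Fam_pair i j : i != j ->
  (Fam i).2 :&: (Fam j).2 = set0 /\ (Fam i).1 :&: (Fam j).1 = S56.
Proof.
case: i => [[|[|[|[|m]]]] hm] //; case: j => [[|[|[|[|n]]]] hn] // => ne;
  try (by case/negP: ne; apply/eqP; apply: val_inj); rewrite /Fam /DS /PT /=;
  (split; [ apply: disj => e; rewrite !inE => He; repeat (case/orP: He => He);
            move/eqP: He => ->; rewrite ?inE !set2_eqE //
          | apply/setP => v; rewrite S56E; elim/K56_all: v; by rewrite !inE ]).
Qed.

Lemma Fam_V i : forall e, e \in (Fam i).2 -> e \subset (Fam i).1.
Proof.
case: (Fam_steiner i) => [[h _ _] _ _] e /h /andP [] //.
Qed.

Lemma Fam_nb (i : 'I_4) : val i < 3 -> forall s u w, s \in S56 ->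
  eadj (Fam i).2 s u -> eadj (Fam i).2 s w -> u = w.
Proof.
case: i => [[|[|[|[|m]]]] hm] //= _; rewrite /Fam /=; apply: DS_nb; by rewrite /okab !inE.
Qed.

Lemma Fam_indep : compl_indep K56 S56 Fam.
Proof.
split; first exact: Fam_steiner.
move=> i j ij; case: (Fam_pair ij) => h1 h2; split => //.
case: (ltnP (val i) 3) => hi.
  move=> x1 x2 p1 p2 hx1 hx2 pa1 pa2 v v1 v2.
  exact: (cond3_gen (@Fam_V i) (@Fam_V j) h2 (Fam_nb hi) hx1 hx2 pa1 pa2 v1 v2).
have hj : val j < 3.
  case: i j ij hi {h1 h2} => [i ii] [j jj] /= ij hi.
  rewrite ltnNge; apply/negP => hj; move: ij; apply/negP; rewrite negbK.
  by apply/eqP; apply: val_inj => /=; lia.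
have ji : j != i by rewrite eq_sym.
case: (Fam_pair ji) => _ h2'.
move=> x1 x2 p1 p2 hx1 hx2 pa1 pa2 v v1 v2.
exact: (cond3_gen (@Fam_V j) (@Fam_V i) h2' (Fam_nb hj) hx1 hx2 pa2 pa1 v2 v1).
Qed.

Definition side (v : K56V) : bool := if v is inl _ then true else false.

Lemma side_adj u v : K56 u v || K56 v u -> side u != side v.
Proof. by case: u; case: v. Qed.

Section Up.
Variables (k : nat) (F : 'I_k -> {set K56V} * {set {set K56V}}).
Hypothesis H : compl_indep K56 S56 F.

Lemma ge_i i : forall e, e \in (F i).2 -> is_graph_edge K56 e.
Proof. by case: H => h _; case: (h i) => [[hE _ _] _ _] e /hE /andP []. Qed.

Lemma conn_i i u v : u \in S56 -> v \in S56 -> exists p, path_in (F i).2 u v p.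
Proof.
case: H => h _; case: (h i) => [[_ hc _] /subsetP hS _] hu hv.
by apply: hc; apply: hS.
Qed.

Lemma first i s t : exists u : K56V, s \in S56 -> t \in S56 -> s != t ->
  exists p, path_in (F i).2 s t (u :: p).
Proof.
case: (boolP (s \in S56)) => hs; last by exists s.
case: (boolP (t \in S56)) => ht; last by exists s.
case: (boolP (s != t)) => st; last by exists s.
case: (conn_i i hs ht) => [[|u p]] pa.
  by move: pa st => /and3P [] _ /= /eqP -> _; rewrite eqxx.
by exists u => _ _ _; exists p.
Qed.

Definition fs i s t : K56V := proj1_sig (constructive_indefinite_description _ (first i s t)).

Lemma fsP i s t : s \in S56 -> t \in S56 -> s != t ->
  exists p, path_in (F i).2 s t (fs i s t :: p).
Proof. rewrite /fs; case: constructive_indefinite_description => u hu /=; exact: hu. Qed.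

Lemma fs_adj i s t : s \in S56 -> t \in S56 -> s != t -> eadj (F i).2 s (fs i s t).
Proof. by move=> hs ht st; case: (fsP i hs ht st) => p /and3P [] /= /andP []. Qed.

Lemma fs_side i s t : s \in S56 -> t \in S56 -> s != t -> side (fs i s t) = ~~ side s.
Proof.
move=> hs ht st; have := side_adj (eadj_graph (@ge_i i) (fs_adj i hs ht st)).
by case: (side s); case: (side (fs i s t)).
Qed.

Lemma sep_gen i j s t u p q : i != j -> s \in S56 -> t \in S56 -> side s = side t ->
  path_in (F i).2 s t (u :: p) -> path_in (F j).2 s t q -> u \in s :: q ->
  side u = ~~ side s -> False.
Proof.
move=> ij hs ht sst pa qa uq su.
case: H => _ /(_ i j ij) [] _ _ /(_ s t _ _ hs ht pa qa u) h.
have hu : u \in [:: s, u & p] by rewrite !inE eqxx orbT.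
case: (h hu uq) => eu; move: su; rewrite eu ?sst;
  by case: (side t).
Qed.

Lemma sep1 i j s t : i != j -> s \in S56 -> t \in S56 -> s != t -> side s = side t ->
  fs i s t = fs j s t -> False.
Proof.
move=> ij hs ht st sst e.
case: (fsP i hs ht st) => p pa; case: (fsP j hs ht st) => q qa.
apply: (sep_gen ij hs ht sst pa qa); first by rewrite e !inE eqxx orbT.
exact: fs_side.
Qed.

Lemma sep2 i j s t : i != j -> s \in S56 -> t \in S56 -> s != t -> side s = side t ->
  fs i s t = fs j t s -> False.
Proof.
move=> ij hs ht st sst e.
case: (fsP i hs ht st) => p pa.
have ts : t != s by rewrite eq_sym.
case: (fsP j ht hs ts) => q qa.
case: (path_in_rev qa) => q' [qa' hq].
apply: (sep_gen ij hs ht sst pa qa'); first by rewrite -hq e !inE eqxx orbT.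
exact: fs_side.
Qed.

Lemma common_edge i j u v : i != j -> [set u; v] \in (F i).2 -> [set v; u] \in (F j).2 -> False.
Proof.
move=> ij h1 h2; case: H => _ /(_ i j ij) [] h _ _.
have : [set u; v] \in (F i).2 :&: (F j).2 by rewrite inE h1 setUC h2.
by rewrite h inE.
Qed.

Definition xidx (v : K56V) : 'I_5 := if v is inl a then a else ord0.
Definition yidx (v : K56V) : 'I_6 := if v is inr a then a else ord0.

Lemma fs_inl i s t : s \in S56 -> t \in S56 -> s != t -> side s = false ->
  fs i s t = inl (xidx (fs i s t)).
Proof.
move=> hs ht st ss; have := fs_side i hs ht st; rewrite ss.
by case: (fs i s t).
Qed.

Lemma fs_inr i s t : s \in S56 -> t \in S56 -> s != t -> side s = true ->
  fs i s t = inr (yidx (fs i s t)).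
Proof.
move=> hs ht st ss; have := fs_side i hs ht st; rewrite ss.
by case: (fs i s t).
Qed.

Lemma bound : k <= 4.
Proof.
have hY0 : Y0 \in S56 by rewrite S56E !inE.
have hY1 : Y1 \in S56 by rewrite S56E !inE.
have hX0 : X0 \in S56 by rewrite S56E !inE.
have hX1 : X1 \in S56 by rewrite S56E !inE.
pose f i := fs i Y0 Y1.
have fl : forall i, f i = inl (xidx (f i)) by move=> i; apply: fs_inl.
have finj : injective (fun i => xidx (f i)).
  move=> i j e; case: (eqVneq i j) => // ij; exfalso.
  by apply: (sep1 ij hY0 hY1 isT erefl); rewrite -/(f i) -/(f j) (fl i) (fl j) e.
case: (leqP k 4) => // k5.
have k5' : #|'I_5| <= #|'I_k| by rewrite !card_ord; lia.
have onto := inj_card_onto finj k5'.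
have gf : forall i, fs i Y1 Y0 = f i.
  move=> i; have gl := fs_inl i hY1 hY0 isT erefl.
  case/codomP: (onto (xidx (fs i Y1 Y0))) => j ej.
  have e : fs i Y1 Y0 = f j by rewrite gl ej -fl.
  case: (eqVneq i j) => [eij|ij]; first by rewrite e eij.
  exfalso.
  exact: (sep2 ij hY1 hY0 isT erefl e).
case/codomP: (onto (Ordinal (isT : 0 < 5))) => a ea.
case/codomP: (onto (Ordinal (isT : 1 < 5))) => b eb.
have fa : f a = X0 by rewrite fl -ea.
have fb : f b = X1 by rewrite fl -eb.
have ab : a != b by apply/eqP => e; move: fa; rewrite e fb.
have /andP [_ ma0] : eadj (F a).2 Y0 X0 by rewrite -fa; apply: fs_adj.
have /andP [_ ma1] : eadj (F a).2 Y1 X0 by rewrite -fa -gf; apply: fs_adj.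
have /andP [_ mb0] : eadj (F b).2 Y0 X1 by rewrite -fb; apply: fs_adj.
have /andP [_ mb1] : eadj (F b).2 Y1 X1 by rewrite -fb -gf; apply: fs_adj.
pose h i := fs i X0 X1.
pose h2 i := fs i X1 X0.
have hA : forall i, h i \in [:: Y0; Y1] -> i = a.
  move=> i hi; case: (eqVneq i a) => // ia; exfalso.
  have /andP [_] := fs_adj i hX0 hX1 isT; rewrite -/(h i).
  move: hi; rewrite !inE => /orP [] /eqP -> m.
  - exact: (common_edge ia m ma0).
  - exact: (common_edge ia m ma1).
have hB : forall i, h2 i \in [:: Y0; Y1] -> i = b.
  move=> i hi; case: (eqVneq i b) => // ib; exfalso.
  have /andP [_] := fs_adj i hX1 hX0 isT; rewrite -/(h2 i).
  move: hi; rewrite !inE => /orP [] /eqP -> m.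
  - exact: (common_edge ib m mb0).
  - exact: (common_edge ib m mb1).
pose phi i := if i == a then h2 i else h i.
have phir : forall i, phi i = inr (yidx (phi i)).
  move=> i; rewrite /phi; case: eqP => _.
  - exact: (fs_inr i hX1 hX0 isT erefl).
  - exact: (fs_inr i hX0 hX1 isT erefl).
have phiS : forall i, phi i \notin [:: Y0; Y1].
  move=> i; rewrite /phi; case: eqP => [ia|ia].
  - apply/negP => /hB ib; move: ab; by rewrite -ia ib eqxx.
  - by apply/negP => /hA.
have phi_ge : forall i, 2 <= yidx (phi i).
  move=> i; move: (phir i) (phiS i); case: (yidx (phi i)) => [[|[|m]] hm] -> //.
pose psi i : 'I_4 := inord (yidx (phi i) - 2).
have psi_inj : injective psi.
  move=> i j e.
  have e1 : yidx (phi i) - 2 = yidx (phi j) - 2.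
    move/(congr1 val): e; rewrite /psi /= !inordK //.
    - by have := ltn_ord (yidx (phi j)); lia.
    - by have := ltn_ord (yidx (phi i)); lia.
  have e2 : yidx (phi i) = yidx (phi j).
    by apply: ord_inj; have := phi_ge i; have := phi_ge j; lia.
  have e3 : phi i = phi j by rewrite phir e2 -phir.
  move: e3; rewrite /phi.
  case: (eqVneq i a) => [ia|ia]; case: (eqVneq j a) => [ja|ja].
  - by rewrite ia ja.
  - rewrite ia => e3; exfalso.
    by apply: (sep2 (i:=a) (j:=j) _ hX1 hX0 isT erefl e3); rewrite eq_sym.
  - rewrite ja => e3; exfalso.
    exact: (sep2 (i:=i) (j:=a) ia hX0 hX1 isT erefl e3).
  - move=> e3.
    case: (eqVneq i j) => // ij; exfalso.
    exact: (sep1 ij hX0 hX1 isT erefl e3).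
have := leq_card _ psi_inj; rewrite !card_ord => k4.
by rewrite ltnNge k4 in k5.
Qed.

End Up.


Theorem lemma3p9 : kappa_star_eq K56 S56 4.
Proof.
split; first by exists Fam; exact: Fam_indep.
by move=> k F H; exact: (bound H).
Qed.
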